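(* Let $(E,\mathscr{T},\le)$ be a Hausdorff Tychonoff space endowed with either the discrete preorder (i.e. $x\le y$ iff $x=y$) or the indiscrete preorder (i.e. $x\le y$ for all $x,y$). Let $\beta:E\to\beta E$ be the Stone–Čech compactification and $\le_\beta$ the preorder on $\beta E$ with $G(\le_\beta)=\bigcap_{f\in\mathcal{F}}G_{\tilde f}$, where $\mathcal{F}$ is the family of continuous isotone functions $f:E\to[0,1]$ and $\tilde f$ the unique continuous extension of $f\circ\beta^{-1}$ to $\beta E$. Then $(\beta E,\mathscr{T}_\beta,\le_\beta)$ is the Stone–Čech compactification endowed with the discrete preorder (resp. the indiscrete preorder).
   Context: Isotone: $x\le y\Rightarrow f(x)\le f(y)$. $G_f=\{(x,y):f(x)\le f(y)\}$, and $G(\le)$ denotes the graph of a preorder. *)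

(* Defs.v *)
From HB Require Import structures.
From mathcomp Require Import all_boot all_order all_algebra.
From mathcomp Require Import all_classical all_reals all_analysis.
Set Implicit Arguments. Unset Strict Implicit. Unset Printing Implicit Defensive.
Import Order.TTheory GRing.Theory Num.Theory numFieldNormedType.Exports.
Local Open Scope classical_set_scope.
Local Open Scope ring_scope.

Definition tychonoff_sp (R : realType) (T : topologicalType) :=
  forall (a : T) (B : set T), closed B -> ~ B a ->
    exists f : T -> R, [/\ continuous f, (forall x, 0 <= f x <= 1),
                           f a = 0 & (forall x, B x -> f x = 1)].

Definition embedding (E K : topologicalType) (b : E -> K) :=
  [/\ continuous b, injective b &
      forall U : set E, open U -> exists V : set K, open V /\ b @^-1` V = U].

Definition stone_cech (E K : topologicalType) (b : E -> K) :=
  [/\ compact [set: K], hausdorff_space K, embedding b, dense (range b) &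
      forall (Y : topologicalType), compact [set: Y] -> hausdorff_space Y ->
        forall f : E -> Y, continuous f ->
          exists g : K -> Y, continuous g /\ g \o b = f].

Definition isotone (T : Type) (R : realType) (le : T -> T -> Prop) (f : T -> R) :=
  forall x y, le x y -> f x <= f y.

Definition F_iso (R : realType) (E : topologicalType) (le : E -> E -> Prop)
  (f : E -> R) :=
  [/\ continuous f, (forall x, 0 <= f x <= 1) & isotone le f].

(* the preorder <=_beta on K: (x,y) lies in G_{f~} for every f in F, where
   f~ is the (unique) continuous extension of f o b^-1 to K, i.e. the
   continuous g : K -> R with g o b = f. *)
Definition le_beta (R : realType) (E K : topologicalType) (b : E -> K)
  (le : E -> E -> Prop) (x y : K) :=
  forall f : E -> R, F_iso le f ->
    forall g : K -> R, continuous g -> g \o b = f -> g x <= g y.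

(* Main.v *)
Require Import Defs.
From HB Require Import structures.
From mathcomp Require Import all_boot all_order all_algebra.
From mathcomp Require Import all_classical all_reals all_analysis.
From mathcomp Require Import lra.
Import Order.TTheory GRing.Theory Num.Theory numFieldNormedType.Exports.
Local Open Scope classical_set_scope.
Local Open Scope ring_scope.

Theorem mainTheorem8 (R : realType) (E K : topologicalType) (b : E -> K) :
  hausdorff_space E -> tychonoff_sp R E -> stone_cech b ->
  (forall x y : K, @le_beta R E K b (fun u v => u = v) x y <-> x = y) /\
  (forall x y : K, @le_beta R E K b (fun _ _ => True) x y).
Proof.
move=> _ _ [cK hK [cb _ _] dK _]; split.
  move=> x y; split; last first.
    by move=> -> f _ g _ _.
  move=> H; apply: contrapT => xy.
  have cr : completely_regular_space K.
    apply: (@normal_completely_regular R); first exact: compact_normal.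
    exact: hausdorff_accessible.
  have := cr y [set x] (accessible_closed_set1 (hausdorff_accessible hK) (x:=x)).
  move=> /(_ (fun e => xy (esym e))) /(@uniform_separatorP _ R).
  case=> f [cf f01 f0 f1].
  have fy : f y = 0 by apply: f0; exists y.
  have fx : f x = 1 by apply: f1; exists x.
  have : F_iso (fun u v => u = v) (f \o b).
    split.
    - by move=> e; apply: continuous_comp; [exact: cb | exact: cf].
    - move=> e; have /= := f01 (f (b e)) (ex_intro2 _ _ (b e) I erefl).
      by rewrite in_itv /=.
    - by move=> u v ->.
  move=> Hiso; have := H (f \o b) Hiso f cf erefl.
  by rewrite fy fx ler10.
move=> x y f [cf _ fiso] g cg gb.
rewrite leNgt; apply/negP => yx.
pose c := (g x + g y) / 2.
have o1 : open (g @^-1` [set z | c < z]).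
  by apply: open_comp => [z _|]; [exact: cg | exact: open_gt].
have o2 : open (g @^-1` [set z | z < c]).
  by apply: open_comp => [z _|]; [exact: cg | exact: open_lt].
have [z1 [h1 [e1 _ ez1]]] : (g @^-1` [set z | c < z]) `&` range b !=set0.
  apply: dK o1; exists x => /=; rewrite /c; lra.
have [z2 [h2 [e2 _ ez2]]] : (g @^-1` [set z | z < c]) `&` range b !=set0.
  apply: dK o2; exists y => /=; rewrite /c; lra.
move: h1 h2; rewrite -ez1 -ez2 /=.
have := fiso e1 e2 I; rewrite -gb /=; lra.
Qed.
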